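(* Let $n\ge m\ge0$, $d\ge1$, and let $t_2,\dots,t_n,s_1,\dots,s_m$ be integers. Let $\tilde\omega$ be the class of $\prod_{i=2}^nx_i^{t_i}\prod_{j=1}^my_j^{s_j}\,\frac{dx_2}{x_2}\wedge\cdots\wedge\frac{dx_n}{x_n}\wedge\frac{dy_1}{y_1}\wedge\cdots\wedge\frac{dy_m}{y_m}$ in $\mathcal{H}^{n+m-1}_{\mathrm{dR}}(U/S,f)$. Then for every $2\le i\le n$ and $1\le j\le m$, $$(D-t_i/d)\,\tilde\omega=x_i^d\cdot\tilde\omega\qquad\text{and}\qquad (D+s_j/d)\,\tilde\omega=y_j^d\cdot\tilde\omega,$$ where $x_i^d\cdot\tilde\omega$ (resp. $y_j^d\cdot\tilde\omega$) is the class of the form multiplied by $x_i^d$ (resp. $y_j^d$).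
   Context: Varieties over $\mathbb{C}$. $S=\mathbb{G}_m\setminus\{1\}$ if $n=m$, $S=\mathbb{G}_m$ if $n>m$, coordinate $z$. $U=S\times\mathbb{G}_m^{n+m-1}$ with coordinates $(z,x_2,\dots,x_n,y_1,\dots,y_m)$, $f=\sum_{i=2}^nx_i^d-\sum_jy_j^d+z\prod_jy_j^d/\prod_{i\ge2}x_i^d$. $\mathcal{H}^{n+m-1}_{\mathrm{dR}}(U/S,f)$ is the $(n+m-1)$-st cohomology of the relative twisted de Rham complex $(\Omega^\bullet_{U/S},d+df)$, and $D=\nabla_{z\partial_z}$ is the Gauss–Manin connection, $\nabla_{z\partial_z}[g\eta]=[(z\partial_zg+z\partial_z(f)\,g)\eta]$. *)

(* Defs.v *)
(* Relative twisted de Rham cohomology of the torus family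
   U = S x G_m^{n+m-1} over S, in top degree, written out explicitly. *)
From HB Require Import structures.
From mathcomp Require Import all_boot all_order all_algebra.
From mathcomp Require Import complex.
From mathcomp Require Import Rstruct.
Unset Printing Implicit Defensive.
Import Order.TTheory GRing.Theory Num.Theory.
Local Open Scope ring_scope.

Notation CC := (complex Rdefinitions.R).

Section Twisted.
Variables n m d : nat.

(* the x-variables x_2..x_n are indexed by i : 'I_(n.-1) (x_{i+2});
   the y-variables y_1..y_m by j : 'I_m (y_{j+1}). *)
Local Notation nx := n.-1.

(* A term  c * z^a * (z-1)^(-b) * prod_i x_i^(u i) * prod_j y_j^(v j),
   a regular function on U (b must be 0 when n <> m, see [admissible]). *)
Record term := Term {
  tc : CC; tz : int; tz1 : nat; tx : 'I_nx -> int; ty : 'I_m -> int }.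

(* A regular function on U, given as a finite sum of terms; a top-degree
   relative form  g * dx_2/x_2 /\ ... /\ dy_m/y_m  is represented by g. *)
Definition rfun := seq term.

Definition admissible (g : rfun) : Prop :=
  n <> m -> all (fun T => tz1 T == 0%N) g.

Record point := Point { pz : CC; px : 'I_nx -> CC; py : 'I_m -> CC }.

Definition in_U (P : point) : Prop :=
  [/\ pz P != 0, (n = m -> pz P != 1),
      (forall i, px P i != 0) & (forall j, py P j != 0)].

Definition eval_term (T : term) (P : point) : CC :=
  tc T * pz P ^ tz T * ((pz P - 1) ^+ tz1 T)^-1
  * (\prod_i px P i ^ tx T i) * (\prod_j py P j ^ ty T j).

Definition eval (g : rfun) (P : point) : CC := \sum_(T <- g) eval_term T P.

Definition scale (c : CC) (g : rfun) : rfun :=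
  [seq Term (c * tc T) (tz T) (tz1 T) (tx T) (ty T) | T <- g].

Definition mul_term (T1 T2 : term) : term :=
  Term (tc T1 * tc T2) (tz T1 + tz T2) (tz1 T1 + tz1 T2)
       (fun i => tx T1 i + tx T2 i) (fun j => ty T1 j + ty T2 j).

Definition mul (g1 g2 : rfun) : rfun := [seq mul_term T1 T2 | T1 <- g1, T2 <- g2].

Definition thx (i : 'I_nx) (g : rfun) : rfun :=
  [seq Term (tc T * (tx T i)%:~R) (tz T) (tz1 T) (tx T) (ty T) | T <- g].
Definition thy (j : 'I_m) (g : rfun) : rfun :=
  [seq Term (tc T * (ty T j)%:~R) (tz T) (tz1 T) (tx T) (ty T) | T <- g].
(* z d/dz (z^a (z-1)^-b) = a z^a (z-1)^-b - b z^(a+1) (z-1)^-(b+1) *)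
Definition thz (g : rfun) : rfun :=
  flatten [seq [:: Term (tc T * (tz T)%:~R) (tz T) (tz1 T) (tx T) (ty T);
                   Term (- (tc T * (tz1 T)%:R)) (tz T + 1) (tz1 T).+1 (tx T) (ty T)]
          | T <- g].

Definition unitx (i : 'I_nx) (e : int) : 'I_nx -> int :=
  fun k => if k == i then e else 0.
Definition unity (j : 'I_m) (e : int) : 'I_m -> int :=
  fun k => if k == j then e else 0.

(* f = sum_{i>=2} x_i^d - sum_j y_j^d + z prod_j y_j^d / prod_{i>=2} x_i^d *)
Definition fpot : rfun :=
  [seq Term 1 0 0 (unitx i d) (fun=> 0) | i <- enum 'I_nx]
  ++ [seq Term (-1) 0 0 (fun=> 0) (unity j d) | j <- enum 'I_m]
  ++ [:: Term 1 1 0 (fun=> - (d%:Z)) (fun=> d%:Z)].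

Definition nabx (i : 'I_nx) (g : rfun) : rfun := thx i g ++ mul g (thx i fpot).
Definition naby (j : 'I_m) (g : rfun) : rfun := thy j g ++ mul g (thy j fpot).

(* g * Omega is in the image of (d + df) on relative (n+m-2)-forms
   sum_k g_k * omega_k, where omega_k is Omega with its k-th factor removed:
   (d + df)(g_k omega_k) = (-1)^k (theta_k g_k + g_k theta_k f) Omega. *)
Definition exact (g : rfun) : Prop :=
  exists (gx : 'I_nx -> rfun) (gy : 'I_m -> rfun),
    [/\ (forall i, admissible (gx i)), (forall j, admissible (gy j)) &
        forall P, in_U P ->
          eval g P = \sum_(i < nx) (-1) ^+ i * eval (nabx i (gx i)) P
                     + \sum_(j < m) (-1) ^+ (nx + j) * eval (naby j (gy j)) P].

Definition cohom_eq (g1 g2 : rfun) : Prop := exact (g1 ++ scale (-1) g2).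

Definition GM (g : rfun) : rfun := thz g ++ mul g (thz fpot).

Definition omega (t : 'I_nx -> int) (s : 'I_m -> int) : rfun :=
  [:: Term 1 0 0 t s].

Definition xpow (i : 'I_nx) (g : rfun) : rfun :=
  mul [:: Term 1 0 0 (unitx i d) (fun=> 0)] g.
Definition ypow (j : 'I_m) (g : rfun) : rfun :=
  mul [:: Term 1 0 0 (fun=> 0) (unity j d)] g.

End Twisted.

(* Main.v *)
Require Import Defs.
From HB Require Import structures.
From mathcomp Require Import all_boot all_order all_algebra.
From mathcomp Require Import complex Rstruct ring.
Import Order.TTheory GRing.Theory Num.Theory.
Local Open Scope ring_scope.

Lemma eval_cat n m g1 g2 P : Defs.eval n m (g1 ++ g2) P = Defs.eval n m g1 P + Defs.eval n m g2 P.
Proof. by rewrite /eval big_cat. Qed.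

Lemma eval_nil n m P : Defs.eval n m [::] P = 0.
Proof. by rewrite /eval big_nil. Qed.

Lemma eval_scale n m c g P : Defs.eval n m (scale n m c g) P = c * Defs.eval n m g P.
Proof.
rewrite /eval big_map mulr_sumr; apply: eq_bigr => T _.
by rewrite /eval_term /= !mulrA.
Qed.

Lemma eval_term_mul n m T1 T2 P : in_U n m P ->
  Defs.eval_term n m (mul_term n m T1 T2) P = Defs.eval_term n m T1 P * Defs.eval_term n m T2 P.
Proof.
case=> hz _ hx hy.
rewrite /eval_term /= expfzDr // exprD invfM.
have -> : \prod_i px n m P i ^ (tx n m T1 i + tx n m T2 i)
   = (\prod_i px n m P i ^ tx n m T1 i) * \prod_i px n m P i ^ tx n m T2 i.
  by rewrite -big_split; apply: eq_bigr => i _; rewrite expfzDr.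
have -> : \prod_i py n m P i ^ (ty n m T1 i + ty n m T2 i)
   = (\prod_i py n m P i ^ ty n m T1 i) * \prod_i py n m P i ^ ty n m T2 i.
  by rewrite -big_split; apply: eq_bigr => i _; rewrite expfzDr.
ring.
Qed.

Lemma eval_mul n m g1 g2 P : in_U n m P ->
  Defs.eval n m (Defs.mul n m g1 g2) P = Defs.eval n m g1 P * Defs.eval n m g2 P.
Proof.
move=> hP; rewrite /eval /mul big_allpairs_dep mulr_suml; apply: eq_bigr => T1 _.
rewrite mulr_sumr; apply: eq_bigr => T2 _; exact: eval_term_mul.
Qed.

Lemma eval_term0 n m a b u v P : Defs.eval_term n m (Defs.Term n m 0 a b u v) P = 0.
Proof. by rewrite /eval_term /= !mul0r. Qed.

Definition EE n m (d : nat) P := Defs.eval_term n m (Defs.Term n m 1 1 0 (fun=> - (d%:Z)) (fun=> d%:Z)) P.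

Lemma prodx_unit n m (d : nat) P (i : 'I_n.-1) :
  \prod_k px n m P k ^ unitx n i d k = px n m P i ^+ d.
Proof.
rewrite (bigD1 i) //= /unitx eqxx big1 ?mulr1 // => k /negbTE ->; exact: expr0z.
Qed.

Lemma prody_unit n m (d : nat) P (j : 'I_m) :
  \prod_k py n m P k ^ unity m j d k = py n m P j ^+ d.
Proof.
rewrite (bigD1 j) //= /unity eqxx big1 ?mulr1 // => k /negbTE ->; exact: expr0z.
Qed.

Lemma prod0x n m P : \prod_k px n m P k ^ (0:int) = 1.
Proof. by rewrite big1. Qed.
Lemma prod0y n m P : \prod_k py n m P k ^ (0:int) = 1.
Proof. by rewrite big1. Qed.

Lemma eval_thx_fpot n m (d : nat) i P :
  Defs.eval n m (thx n m i (fpot n m d)) P = d%:R * px n m P i ^+ d - d%:R * EE n m d P.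
Proof.
rewrite /thx /fpot !map_cat /Defs.eval !big_cat !big_map /=.
rewrite (bigD1_seq i) /=; last 2 first.
  by rewrite -enumT mem_enum.
  by rewrite -enumT enum_uniq.
rewrite big1_seq; last first.
  move=> k /andP[hk _]; rewrite /unitx eq_sym (negbTE hk) /Defs.eval_term /= !mulr0 !mul0r //.
rewrite big1_seq; last first.
  move=> k _; rewrite /Defs.eval_term /= !mulr0 !mul0r //.
rewrite big_cons big_nil /EE /Defs.eval_term /= /unitx eqxx prodx_unit prod0y.
rewrite !expr0 invr1 !expr1z intrN -!pmulrn; ring.
Qed.

Lemma eval_thy_fpot n m (d : nat) j P :
  Defs.eval n m (thy n m j (fpot n m d)) P = - (d%:R * py n m P j ^+ d) + d%:R * EE n m d P.
Proof.
rewrite /thy /fpot !map_cat /Defs.eval !big_cat !big_map /=.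
rewrite big1_seq; last first.
  move=> k _; rewrite /Defs.eval_term /= !mulr0 !mul0r //.
rewrite (bigD1_seq j) /=; last 2 first.
  by rewrite -enumT mem_enum.
  by rewrite -enumT enum_uniq.
rewrite big1_seq; last first.
  move=> k /andP[hk _]; rewrite /unity eq_sym (negbTE hk) /Defs.eval_term /= !mulr0 !mul0r //.
rewrite big_cons big_nil /EE /Defs.eval_term /= /unity eqxx prody_unit prod0x.
rewrite !expr0 invr1 !expr1z -!pmulrn; ring.
Qed.

Lemma eval_flatten n m (l : seq (rfun n m)) P :
  Defs.eval n m (flatten l) P = \sum_(g <- l) Defs.eval n m g P.
Proof.
elim: l => [|g l IH]; first by rewrite big_nil /Defs.eval big_nil.
by rewrite /= eval_cat IH big_cons.
Qed.

Lemma eval_thz_fpot n m (d : nat) P :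
  Defs.eval n m (thz n m (fpot n m d)) P = EE n m d P.
Proof.
rewrite /thz eval_flatten /fpot !map_cat !big_cat !big_map /=.
rewrite big1_seq; last first.
  move=> k _; rewrite /Defs.eval /= !big_cons big_nil /Defs.eval_term /= !mulr0 !mul0r ?oppr0 ?mul0r ?addr0 //.
rewrite big1_seq; last first.
  move=> k _; rewrite /Defs.eval /= !big_cons big_nil /Defs.eval_term /= !mulr0 !mul0r ?oppr0 ?mul0r ?addr0 //.
rewrite big_cons big_nil /Defs.eval !big_cons big_nil /EE /Defs.eval_term /=.
rewrite !mulr0 oppr0 !mul0r !addr0 !add0r mulr1; done.
Qed.

Lemma eval_omega n m t s P :
  Defs.eval n m (omega n m t s) P = \prod_i px n m P i ^ t i * \prod_j py n m P j ^ s j.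
Proof. rewrite /Defs.eval big_cons big_nil /Defs.eval_term /= expr0z expr0 invr1; ring. Qed.

Lemma eval_thx_omega n m i c t s P :
  Defs.eval n m (thx n m i (scale n m c (omega n m t s))) P = c * (t i)%:~R * Defs.eval n m (omega n m t s) P.
Proof.
rewrite eval_omega /Defs.eval big_cons big_nil /Defs.eval_term /= expr0z expr0 invr1; ring.
Qed.

Lemma eval_thy_omega n m j c t s P :
  Defs.eval n m (thy n m j (scale n m c (omega n m t s))) P = c * (s j)%:~R * Defs.eval n m (omega n m t s) P.
Proof.
rewrite eval_omega /Defs.eval big_cons big_nil /Defs.eval_term /= expr0z expr0 invr1; ring.
Qed.

Lemma eval_thz_omega n m t s P :
  Defs.eval n m (thz n m (omega n m t s)) P = 0.
Proof.
rewrite /Defs.eval /= !big_cons big_nil /Defs.eval_term /=; ring.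
Qed.

Lemma eval_xmon n m (d : nat) i P :
  Defs.eval n m [:: Defs.Term n m 1 0 0 (unitx n i d) (fun=> 0)] P = px n m P i ^+ d.
Proof.
rewrite /Defs.eval big_cons big_nil /Defs.eval_term /= prodx_unit prod0y expr0z expr0 invr1; ring.
Qed.

Lemma eval_ymon n m (d : nat) j P :
  Defs.eval n m [:: Defs.Term n m 1 0 0 (fun=> 0) (unity m j d)] P = py n m P j ^+ d.
Proof.
rewrite /Defs.eval big_cons big_nil /Defs.eval_term /= prody_unit prod0x expr0z expr0 invr1; ring.
Qed.

Lemma sign2 (k : nat) : (-1) ^+ k * (-1) ^+ k = 1 :> CC.
Proof. by rewrite -expr2 sqrr_sign. Qed.

Theorem lemma2p15 (n m d : nat) (t : 'I_n.-1 -> int) (s : 'I_m -> int) :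
  (m <= n)%N -> (1 <= d)%N ->
  (forall i : 'I_n.-1,
     cohom_eq n m d
       (GM n m d (omega n m t s) ++ scale n m (- ((t i)%:~R / d%:R) : CC) (omega n m t s))
       (xpow n m d i (omega n m t s)))
  /\
  (forall j : 'I_m,
     cohom_eq n m d
       (GM n m d (omega n m t s) ++ scale n m ((s j)%:~R / d%:R : CC) (omega n m t s))
       (ypow n m d j (omega n m t s))).
Proof.
move=> _ hd.
have hd0 : (d%:R : CC) != 0 by rewrite pnatr_eq0 -lt0n.
split.
- move=> i.
  exists (fun k => if k == i then scale n m ((-1) ^+ i * (- (d%:R)^-1)) (omega n m t s) else [::]).
  exists (fun _ => [::]).
  split.
  + by move=> k _; case: (k == i).
  + by move=> k _.
  move=> P hP.
  rewrite [X in _ = _ + X]big1; last first.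
    by move=> j _; rewrite /naby eval_cat eval_mul // eval_nil !mul0r addr0 mulr0.
  rewrite addr0 (bigD1 i) // eqxx big1; last first.
    by move=> k /negbTE -> /=; rewrite /nabx /= eval_nil mulr0.
  rewrite [RHS](_ : _ = (-1) ^+ i * Defs.eval n m (nabx n m d i (scale n m ((-1) ^+ i * - (d%:R)^-1) (omega n m t s))) P); last exact: addr0.
  rewrite /nabx (eval_cat _ _ (thx _ _ _ _)) eval_thx_omega (eval_mul _ _ _ _ _ hP) eval_thx_fpot eval_scale.
  rewrite (eval_cat _ _ (GM _ _ _ _ ++ _)) /GM (eval_cat _ _ (thz _ _ _ ++ _)) (eval_cat _ _ (thz _ _ _)).
  rewrite (eval_mul _ _ _ _ _ hP) eval_thz_fpot eval_thz_omega !eval_scale /xpow (eval_mul _ _ _ _ _ hP) eval_xmon.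
  set W := Defs.eval n m (omega n m t s) P.
  set sg := (-1) ^+ i : CC.
  have hsg : sg * sg = 1 by exact: sign2.
  rewrite mulrDr !mulrA hsg !mul1r.
  field; done.
- move=> j.
  exists (fun _ => [::]).
  exists (fun k => if k == j then scale n m ((-1) ^+ (n.-1 + j) * (d%:R)^-1) (omega n m t s) else [::]).
  split.
  + by move=> k _.
  + by move=> k _; case: (k == j).
  move=> P hP.
  rewrite [X in _ = X + _]big1; last first.
    by move=> k _; rewrite /nabx /= eval_nil mulr0.
  rewrite (bigD1 j) // eqxx big1; last first.
    by move=> k /negbTE -> /=; rewrite /naby /= eval_nil mulr0.
  rewrite [RHS](_ : _ = (-1) ^+ (n.-1 + j) * Defs.eval n m (naby n m d j (scale n m ((-1) ^+ (n.-1 + j) * (d%:R)^-1) (omega n m t s))) P); last first.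
    rewrite add0r; exact: addr0.
  rewrite /naby (eval_cat _ _ (thy _ _ _ _)) eval_thy_omega (eval_mul _ _ _ _ _ hP) eval_thy_fpot.
  rewrite (eval_cat _ _ (GM _ _ _ _ ++ _)) /GM (eval_cat _ _ (thz _ _ _ ++ _)) (eval_cat _ _ (thz _ _ _)).
  rewrite (eval_mul _ _ _ _ _ hP) eval_thz_fpot eval_thz_omega !eval_scale /ypow (eval_mul _ _ _ _ _ hP) eval_ymon.
  set W := Defs.eval n m (omega n m t s) P.
  set sg := (-1) ^+ (n.-1 + j) : CC.
  have hsg : sg * sg = 1 by exact: sign2.
  rewrite mulrDr !mulrA hsg !mul1r.
  field; done.
Qed.
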